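(* Let $4 \le r \le n-1$ and let $m \in \{r,r-1,r-2\}$. If $m<n-1$, then \[\sum_{j=0}^{r-1} \binom{m}{j} \binom{n-m-1}{r-j-1} 2^{r-j-1} > 1 + \binom{n-1}{r-1}.\] If $m=n-1$, then \[\sum_{j=0}^{r-1} \binom{m}{j} \binom{n-m-1}{r-j-1} 2^{r-j-1} = \binom{n-1}{r-1}.\]
   Context: Binomial coefficients $\binom{a}{b}$ are $0$ when $b<0$ or $b>a$. *)

(* Defs.v *)
From mathcomp Require Import all_boot.

(* Main.v *)
Require Import Defs.
From mathcomp Require Import all_boot.
From mathcomp Require Import zify.

Theorem lemma9p2 (n r m : nat) :
  4 <= r -> r <= n - 1 -> m \in [:: r; r - 1; r - 2] ->
  (m < n - 1 ->
     1 + 'C(n - 1, r - 1) <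
       \sum_(0 <= j < r) 'C(m, j) * 'C(n - m - 1, r - j - 1) * 2 ^ (r - j - 1))
  /\
  (m = n - 1 ->
     \sum_(0 <= j < r) 'C(m, j) * 'C(n - m - 1, r - j - 1) * 2 ^ (r - j - 1)
       = 'C(n - 1, r - 1)).
Proof.
move=> hr hrn hm.
have [p Ep] : exists p, r = p.+3 by exists (r-3); lia.
have [N EN] : exists N, n = N.+1 by exists (n-1); lia.
subst r n.
have -> : N.+1 - 1 = N by lia.
have -> : p.+3 - 1 = p.+2 by lia.
have -> : N.+1 - m - 1 = N - m by lia.
rewrite inE !in_cons orbF in hm.
have hmN : m <= N by case/or3P: hm => /eqP ->; lia.
have E : \sum_(0 <= j < p.+3) 'C(m, j) * 'C(N - m, p.+3 - j - 1) * 2 ^ (p.+3 - j - 1)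
   = \sum_(j < p.+3) 'C(m, j) * 'C(N - m, p.+2 - j) * 2 ^ (p.+2 - j).
  rewrite big_mkord; apply: eq_bigr => j _.
  by have -> : p.+3 - j - 1 = p.+2 - j by lia.
rewrite E.
have V := Vandermonde m (N - m) p.+2.
rewrite subnKC // in V.
split.
- move=> hlt.
  have -> : \sum_(j < p.+3) 'C(m, j) * 'C(N - m, p.+2 - j) * 2 ^ (p.+2 - j)
     = \sum_(j < p.+3) 'C(m, j) * 'C(N - m, p.+2 - j)
       + \sum_(j < p.+3) 'C(m, j) * 'C(N - m, p.+2 - j) * (2 ^ (p.+2 - j) - 1).
    rewrite -big_split /=; apply: eq_bigr => j _.
    have h := expn_gt0 2 (p.+2 - j).
    set a := 'C(m, j) * _.
    rewrite mulnBr muln1 addnC subnK // leq_pmulr //.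
  rewrite V.
  rewrite -(big_mkord xpredT (fun j => 'C(m, j) * 'C(N - m, p.+2 - j) * (2 ^ (p.+2 - j) - 1))).
  rewrite !big_nat_recr //=.
  have -> : p.+2 - p.+1 = 1 by lia.
  rewrite bin1 expn1.
  suff : 2 <= 'C(m, p.+1) * (N - m) * (2 - 1).
    move: ('C(m, p.+1) * (N - m) * (2 - 1)) => X.
    move: (\sum_(0 <= i < p) _) => Y.
    move: ('C(m, p) * _ * _) => Z.
    move: ('C(m, p.+2) * _ * _) => W.
    lia.
  rewrite muln1.
  case/or3P: hm => /eqP Em; subst m.
  + rewrite binS binSn.
    have := bin_gt0 p.+2 p. 
    have : 0 < N - p.+3 by lia.
    nia.
  + rewrite binSn. have : 0 < N - p.+2 by lia. nia.
  + rewrite binn. lia.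
- move=> hmeq. subst m. rewrite subnn in V *.
  rewrite -V; apply: eq_bigr => j _.
  case E2: (p.+2 - j) => [|k].
    by rewrite expn0 muln1.
  by rewrite bin0n muln0 mul0n.
Qed.
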